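(* Let $\varphi\colon[\mathbb{F}_2,\mathbb{F}_2]\to\mathbb{Z}$ be the homomorphism defined below and $G_1=\ker\varphi$. Suppose $g\in[\mathbb{F}_2,\mathbb{F}_2]$ satisfies $\varphi(g)=0$ and $g=ab$ with $a,b\in\mathbb{F}_2$ conjugate in $\mathbb{F}_2$. Then $a,b\in G_1$.
   Context: $\mathbb{F}_2$ is the free group on $x,y$. Let $\tilde K$ be the graph with vertex set $\mathbb{Z}^2$ and oriented edges $x^iy^jX$ from $(i,j)$ to $(i+1,j)$ and $x^iy^jY$ from $(i,j)$ to $(i,j+1)$ (the universal abelian cover of the wedge of two circles). A $1$-chain is written $\alpha=P_\alpha(x,y)X+Q_\alpha(x,y)Y$ with $P_\alpha,Q_\alpha$ integer Laurent polynomials (the coefficient of $x^iy^j$ in $P_\alpha$ is the coefficient of the edge $x^iy^jX$, similarly for $Q_\alpha$). For $g\in[\mathbb{F}_2,\mathbb{F}_2]$ written as a word in $x^{\pm1},y^{\pm1}$, the associated cycle $\alpha_g$ is the $1$-cycle traced by the lattice path starting at $(0,0)$ in which a letter $x$ (resp. $x^{-1}$, $y$, $y^{-1}$) moves by $(1,0)$ (resp. $(-1,0)$, $(0,1)$, $(0,-1)$) along the corresponding edge, each edge counted with sign $+1$ if traversed in its orientation and $-1$ otherwise; its homology class depends only on $g$. Let $f_\alpha(y)=P_\alpha(1,y)$. Define $\varphi(g)=f_{\alpha_g}'(1)$; this is a homomorphism $[\mathbb{F}_2,\mathbb{F}_2]\to\mathbb{Z}$. *)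

(* Defs.v *)
From mathcomp Require Import all_boot all_order all_algebra.
Set Implicit Arguments. Unset Strict Implicit. Unset Printing Implicit Defensive.
Import Order.TTheory GRing.Theory Num.Theory.
Local Open Scope ring_scope.

(* a letter is (is_y, is_inverse): x = (false,false), x^-1 = (false,true),
   y = (true,false), y^-1 = (true,true). *)
Definition letter := (bool * bool)%type.
Definition inv_letter (l : letter) : letter := (l.1, ~~ l.2).

Fixpoint reducedb (w : seq letter) : bool :=
  match w with
  | a :: ((b :: _) as t) => (b != inv_letter a) && reducedb t
  | _ => true
  end.

Definition push (l : letter) (s : seq letter) : seq letter :=
  if s is l' :: s' then (if l' == inv_letter l then s' else l :: s) else [:: l].
Definition reduce (w : seq letter) : seq letter := foldr push [::] w.

Lemma reducedb_tail a s : reducedb (a :: s) -> reducedb s.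
Proof. by case: s => [//|b t] /= /andP[]. Qed.

Lemma reducedb_push l s : reducedb s -> reducedb (push l s).
Proof.
case: s => [//|l' s'] /= Hs.
case: ifP => [_|/negbT Hne]; first exact: reducedb_tail Hs.
by rewrite /= Hne.
Qed.

Lemma reducedb_reduce w : reducedb (reduce w).
Proof. by elim: w => [//|l w IH] /=; apply: reducedb_push. Qed.

Definition F2 := {w : seq letter | reducedb w}.
Definition F2_of_word (w : seq letter) : F2 := exist _ (reduce w) (reducedb_reduce w).

Definition f2one : F2 := F2_of_word [::].
Definition f2mul (a b : F2) : F2 := F2_of_word (proj1_sig a ++ proj1_sig b).
Definition f2inv (a : F2) : F2 := F2_of_word (rev (map inv_letter (proj1_sig a))).
Definition f2x : F2 := F2_of_word [:: (false, false)].
Definition f2y : F2 := F2_of_word [:: (true, false)].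

Definition f2comm (u v : F2) : F2 := f2mul (f2mul u v) (f2mul (f2inv u) (f2inv v)).

Inductive in_commutator_subgroup : F2 -> Prop :=
  | cs_one : in_commutator_subgroup f2one
  | cs_comm u v : in_commutator_subgroup (f2comm u v)
  | cs_mul g h : in_commutator_subgroup g -> in_commutator_subgroup h ->
                 in_commutator_subgroup (f2mul g h)
  | cs_inv g : in_commutator_subgroup g -> in_commutator_subgroup (f2inv g).

Definition conjugate (a b : F2) : Prop := exists c : F2, b = f2mul (f2mul c a) (f2inv c).

(* An oriented edge: (is_Y_edge, base vertex (i,j)); x^i y^j X goes (i,j)->(i+1,j),
   x^i y^j Y goes (i,j)->(i,j+1). *)
Definition edge := (bool * (int * int))%type.

Fixpoint path_edges (p : int * int) (w : seq letter) : seq (edge * int) :=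
  match w with
  | [::] => [::]
  | l :: w' =>
    let (i, j) := p in
    match l with
    | (false, false) => ((false, (i, j)), 1) :: path_edges (i + 1, j) w'
    | (false, true)  => ((false, (i - 1, j)), -1) :: path_edges (i - 1, j) w'
    | (true, false)  => ((true, (i, j)), 1) :: path_edges (i, j + 1) w'
    | (true, true)   => ((true, (i, j - 1)), -1) :: path_edges (i, j - 1) w'
    end
  end.

(* the 1-chain alpha_g = P X + Q Y: coefficient of each edge *)
Definition chain_coef (w : seq letter) (e : edge) : int :=
  \sum_(s <- path_edges (0, 0) w | s.1 == e) s.2.

(* f_alpha(y) = P_alpha(1,y) = sum_{i,j} P_{ij} y^j, hence
   f_alpha'(1) = sum_{i,j} j * P_{ij} = sum over X-edges e=(i,j) in the
   (finite) support of the chain of  j * coefficient(e). *)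
Definition phi (g : F2) : int :=
  let w := proj1_sig g in
  \sum_(e <- undup [seq s.1 | s <- path_edges (0, 0) w] | ~~ e.1)
     e.2.2 * chain_coef w e.

Definition in_G1 (g : F2) : Prop := in_commutator_subgroup g /\ phi g = 0.

(* Main.v *)
Require Import Defs.
From mathcomp Require Import all_boot all_order all_algebra.
From mathcomp Require Import ring zify.
Set Implicit Arguments. Unset Strict Implicit. Unset Printing Implicit Defensive.
Import Order.TTheory GRing.Theory Num.Theory.
Local Open Scope ring_scope.

Lemma inv_letterK l : inv_letter (inv_letter l) = l.
Proof. by case: l => a b; rewrite /inv_letter /= negbK. Qed.

Lemma reduce_reduced s : reducedb s -> reduce s = s.
Proof.
elim: s => [//|l s IH] Hs /=.
rewrite IH; last exact: reducedb_tail Hs.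
case: s Hs {IH} => [//|l' s'] /= /andP[Hne _].
by rewrite (negbTE Hne).
Qed.

Lemma push_cancel l r : reducedb r -> push l (push (inv_letter l) r) = r.
Proof.
case: r => [|h r'] /=; first by rewrite eqxx.
rewrite inv_letterK; case: eqP => [->|Hne] Hr /=.
  case: r' Hr => [//|h' r''] /= /andP[Hne' _].
  by rewrite (negbTE Hne').
by rewrite eqxx.
Qed.

Definition act (u t : seq letter) := foldr push t u.

Lemma reducedb_act u t : reducedb t -> reducedb (act u t).
Proof. by elim: u => [//|l u IH] Ht /=; apply: reducedb_push; apply: IH. Qed.

Lemma act_push l s t : reducedb t -> reducedb s ->
  act (push l s) t = push l (act s t).
Proof.
move=> Ht; case: s => [//|l' s'] /= Hs.
case: eqP => [->|_] //.
by rewrite push_cancel // reducedb_act.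
Qed.

Lemma act_reduce u t : reducedb t -> act (reduce u) t = act u t.
Proof.
move=> Ht; elim: u => [//|l u IH] /=.
by rewrite act_push // ?reducedb_reduce // IH.
Qed.

Lemma reduce_cat u v : reduce (u ++ v) = act u (reduce v).
Proof. by rewrite /reduce foldr_cat. Qed.

Lemma reduce_catl u v : reduce (reduce u ++ v) = reduce (u ++ v).
Proof. by rewrite !reduce_cat act_reduce // reducedb_reduce. Qed.

Lemma reduce_catr u v : reduce (u ++ reduce v) = reduce (u ++ v).
Proof. by rewrite !reduce_cat reduce_reduced // reducedb_reduce. Qed.

Lemma reduce_idem u : reduce (reduce u) = reduce u.
Proof. by rewrite reduce_reduced // reducedb_reduce. Qed.

Lemma reduce_cancel p l q :
  reduce (p ++ l :: inv_letter l :: q) = reduce (p ++ q).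
Proof.
rewrite !reduce_cat /=; congr act.
by rewrite push_cancel // reducedb_reduce.
Qed.

Definition eqw u v := reduce u = reduce v.

Lemma eqw_cat u u' v v' : eqw u u' -> eqw v v' -> eqw (u ++ v) (u' ++ v').
Proof.
rewrite /eqw => H1 H2.
by rewrite -reduce_catl H1 reduce_catl -reduce_catr H2 reduce_catr.
Qed.

Lemma eqw_refl u : eqw u u. Proof. by []. Qed.
Lemma eqw_sym u v : eqw u v -> eqw v u. Proof. by []. Qed.
Lemma eqw_trans u v w : eqw u v -> eqw v w -> eqw u w.
Proof. by rewrite /eqw => ->. Qed.

Definition Iw (u : seq letter) := rev (map inv_letter u).

Lemma Iw_cat u v : Iw (u ++ v) = Iw v ++ Iw u.
Proof. by rewrite /Iw map_cat rev_cat. Qed.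

Lemma IwK u : Iw (Iw u) = u.
Proof.
rewrite /Iw map_rev revK -map_comp.
by rewrite (eq_map (g := id)) ?map_id // => l /=; rewrite inv_letterK.
Qed.

Lemma Iw_cons l u : Iw (l :: u) = Iw u ++ [:: inv_letter l].
Proof. by rewrite /Iw /= rev_cons cats1. Qed.

Lemma reduce_Iw u : reduce (Iw (reduce u)) = reduce (Iw u).
Proof.
elim: u => [//|l u IH] /=.
have H : forall s, reduce (Iw (push l s)) = reduce (Iw s ++ [:: inv_letter l]).
  case=> [|l' s'] /=; first by [].
  case: eqP => [->|_]; last by rewrite Iw_cons.
  rewrite Iw_cons inv_letterK -catA /=.
  by rewrite -[Iw s']cats0 -catA reduce_cancel.
by rewrite H -reduce_catl IH reduce_catl Iw_cons.
Qed.

Lemma eqw_Iw u v : eqw u v -> eqw (Iw u) (Iw v).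
Proof. by rewrite /eqw -reduce_Iw => ->; rewrite reduce_Iw. Qed.

Lemma eqw_cancel p l q : eqw (p ++ l :: inv_letter l :: q) (p ++ q).
Proof. exact: reduce_cancel. Qed.

Lemma eqw_Iwr u : eqw (u ++ Iw u) [::].
Proof.
elim: u => [//|l u IH].
rewrite Iw_cons catA /=.
apply: (@eqw_trans _ (l :: [::] ++ [:: inv_letter l])).
  by apply: (@eqw_cat [:: l] [:: l]) => //; apply: eqw_cat.
by rewrite /eqw (reduce_cancel [::] l [::]).
Qed.

Lemma eqw_Iwl u : eqw (Iw u ++ u) [::].
Proof. by have := eqw_Iwr (Iw u); rewrite IwK. Qed.

Lemma F2_eq (a b : F2) : proj1_sig a = proj1_sig b -> a = b.
Proof.
case: a b => [a Ha] [b Hb] /= E; subst b.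
by rewrite (bool_irrelevance Ha Hb).
Qed.

Lemma F2_of_word_eqw u v : eqw u v -> F2_of_word u = F2_of_word v.
Proof. by move=> H; apply: F2_eq. Qed.

Lemma F2_of_val (a : F2) : a = F2_of_word (proj1_sig a).
Proof. by apply: F2_eq; rewrite /= reduce_reduced //; case: a. Qed.

Lemma f2mul_word u v : f2mul (F2_of_word u) (F2_of_word v) = F2_of_word (u ++ v).
Proof. by apply: F2_eq; rewrite /= reduce_catl reduce_catr. Qed.

Lemma f2inv_word u : f2inv (F2_of_word u) = F2_of_word (Iw u).
Proof. by apply: F2_eq; rewrite /= reduce_Iw. Qed.

Definition K u := in_commutator_subgroup (F2_of_word u).

Lemma K_eqw u v : eqw u v -> K u -> K v.
Proof. by rewrite /K => /F2_of_word_eqw ->. Qed.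

Lemma K_nil : K [::].
Proof. by rewrite /K -[F2_of_word _]/f2one; apply: cs_one. Qed.

Lemma K_cat u v : K u -> K v -> K (u ++ v).
Proof. by rewrite /K -f2mul_word; apply: cs_mul. Qed.

Lemma K_Iw u : K u -> K (Iw u).
Proof. by rewrite /K -f2inv_word; apply: cs_inv. Qed.

Lemma K_comm u v : K (u ++ v ++ Iw u ++ Iw v).
Proof.
have := cs_comm (F2_of_word u) (F2_of_word v).
by rewrite /f2comm !f2inv_word !f2mul_word -catA.
Qed.

Lemma K_conj c u : K u -> K (c ++ u ++ Iw c).
Proof.
move=> Ku.
have H := K_cat (K_comm c u) Ku.
apply: K_eqw H.
rewrite -!catA.
apply: eqw_cat => //; apply: eqw_cat => //.
rewrite -[X in eqw _ X]cats0.
by apply: eqw_cat => //; apply: eqw_Iwl.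
Qed.

Definition ex1 (l : letter) : int := if l.1 then 0 else (if l.2 then -1 else 1).
Definition ey1 (l : letter) : int := if l.1 then (if l.2 then -1 else 1) else 0.
Definition exs (w : seq letter) : int := \sum_(l <- w) ex1 l.
Definition eys (w : seq letter) : int := \sum_(l <- w) ey1 l.

Lemma exs_cons l w : exs (l :: w) = ex1 l + exs w.
Proof. by rewrite /exs big_cons. Qed.
Lemma eys_cons l w : eys (l :: w) = ey1 l + eys w.
Proof. by rewrite /eys big_cons. Qed.
Lemma exs_cat u v : exs (u ++ v) = exs u + exs v.
Proof. by rewrite /exs big_cat. Qed.
Lemma eys_cat u v : eys (u ++ v) = eys u + eys v.
Proof. by rewrite /eys big_cat. Qed.

Lemma ex1_inv l : ex1 (inv_letter l) = - ex1 l.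
Proof. by case: l => [[] []]. Qed.
Lemma ey1_inv l : ey1 (inv_letter l) = - ey1 l.
Proof. by case: l => [[] []]. Qed.

Lemma exs_Iw u : exs (Iw u) = - exs u.
Proof.
rewrite /exs /Iw big_rev big_map -sumrN.
by apply: eq_bigr => l _; rewrite ex1_inv.
Qed.
Lemma eys_Iw u : eys (Iw u) = - eys u.
Proof.
rewrite /eys /Iw big_rev big_map -sumrN.
by apply: eq_bigr => l _; rewrite ey1_inv.
Qed.

Lemma exs_push l s : exs (push l s) = ex1 l + exs s.
Proof.
case: s => [|l' s'] /=; first by rewrite exs_cons.
case: eqP => [->|_]; last by rewrite exs_cons.
by rewrite exs_cons ex1_inv addrA subrr add0r.
Qed.
Lemma eys_push l s : eys (push l s) = ey1 l + eys s.
Proof.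
case: s => [|l' s'] /=; first by rewrite eys_cons.
case: eqP => [->|_]; last by rewrite eys_cons.
by rewrite eys_cons ey1_inv addrA subrr add0r.
Qed.

Lemma exs_reduce w : exs (reduce w) = exs w.
Proof. by elim: w => [//|l w IH] /=; rewrite exs_push IH exs_cons. Qed.
Lemma eys_reduce w : eys (reduce w) = eys w.
Proof. by elim: w => [//|l w IH] /=; rewrite eys_push IH eys_cons. Qed.

Lemma commutator_exs (a : F2) : in_commutator_subgroup a ->
  exs (proj1_sig a) = 0 /\ eys (proj1_sig a) = 0.
Proof.
elim => [|u v|g h _ [Hg1 Hg2] _ [Hh1 Hh2]|g _ [H1 H2]] /=.
- by rewrite /exs /eys !big_nil.
- rewrite exs_reduce eys_reduce !exs_cat !eys_cat !exs_reduce !eys_reduce.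
  rewrite !exs_cat !eys_cat !exs_reduce !eys_reduce !exs_Iw !eys_Iw.
  by split; ring.
- by rewrite exs_reduce eys_reduce !exs_cat !eys_cat Hg1 Hg2 Hh1 Hh2.
- by rewrite exs_reduce eys_reduce exs_Iw eys_Iw H1 H2 !oppr0.
Qed.

Definition pw (l : letter) (m : int) : seq letter :=
  match m with Posz k => nseq k l | Negz k => nseq k.+1 (inv_letter l) end.

Lemma pw_succ l m : eqw (pw l (m + 1)) (l :: pw l m).
Proof.
case: m => k.
  by have -> : (Posz k + 1 = Posz k.+1) by lia.
case: k => [|k].
  by rewrite /eqw (reduce_cancel [::] l [::]).
have -> : (Negz k.+1 + 1 = Negz k) by lia.
exact: (esym (reduce_cancel [::] l (pw l (Negz k)))).
Qed.

Lemma pw_pred l m : eqw (pw l (m - 1)) (inv_letter l :: pw l m).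
Proof.
case: m => k.
  case: k => [|k]; first by [].
  have -> : (Posz k.+1 - 1 = Posz k) by lia.
  rewrite /eqw /=.
  have := reduce_cancel [::] (inv_letter l) (nseq k l).
  by rewrite inv_letterK /= => ->.
by have -> : (Negz k - 1 = Negz k.+1) by lia.
Qed.

Lemma exs_nseq k l : exs (nseq k l) = ex1 l *+ k.
Proof.
elim: k => [|k IH]; first by rewrite mulr0n /exs big_nil.
by rewrite (exs_cons l (nseq k l)) IH mulrS.
Qed.
Lemma eys_nseq k l : eys (nseq k l) = ey1 l *+ k.
Proof.
elim: k => [|k IH]; first by rewrite mulr0n /eys big_nil.
by rewrite (eys_cons l (nseq k l)) IH mulrS.
Qed.

Definition lx : letter := (false, false).
Definition ly : letter := (true, false).

Lemma exs_pwx m : exs (pw lx m) = m.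
Proof.
case: m => k; rewrite /pw exs_nseq /=; first by rewrite natz.
by rewrite NegzE mulNrn natz.
Qed.
Lemma eys_pwx m : eys (pw lx m) = 0.
Proof. by case: m => k; rewrite /pw eys_nseq /= mul0rn. Qed.
Lemma exs_pwy m : exs (pw ly m) = 0.
Proof. by case: m => k; rewrite /pw exs_nseq /= mul0rn. Qed.
Lemma eys_pwy m : eys (pw ly m) = m.
Proof.
case: m => k; rewrite /pw eys_nseq /=; first by rewrite natz.
by rewrite NegzE mulNrn natz.
Qed.

Definition Nw m n := pw lx m ++ pw ly n.

Lemma step_pw l0 l m : l = l0 \/ l = inv_letter l0 ->
  eqw (l :: pw l0 m) (pw l0 ((if l == l0 then 1 else -1) + m)).
Proof.
case=> ->.
  by rewrite eqxx addrC; apply: eqw_sym; apply: pw_succ.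
have -> : (inv_letter l0 == l0) = false.
  by case: l0 => a b; rewrite /inv_letter /= xpair_eqE; case: b; rewrite eqxx.
by rewrite addrC; apply: eqw_sym; apply: pw_pred.
Qed.

Lemma S_step l m n : K ([:: l] ++ Nw m n ++ Iw (Nw (ex1 l + m) (ey1 l + n))).
Proof.
rewrite /Nw Iw_cat.
case: l => [[|] b].
-
  have Hy := @step_pw ly (true, b) n.
  have Hy' : eqw ((true, b) :: pw ly n) (pw ly (ey1 (true, b) + n)).
    case: b Hy => Hy; rewrite /ey1 /ex1 /=; apply: Hy; first [by left | by right].
  rewrite [ex1 _]/= add0r.
  have H1 := eqw_Iw Hy'.
  rewrite Iw_cons in H1.
  apply: (@K_eqw ([:: (true, b)] ++ pw lx m ++ Iw [:: (true,b)] ++ Iw (pw lx m))); last first.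
    exact: K_comm.
  rewrite -!catA /=.
  apply: (@eqw_cat [:: (true,b)] [:: (true,b)]) => //.
  apply: (@eqw_cat (pw lx m) (pw lx m)) => //.
  apply: eqw_sym.
  apply: (@eqw_trans _ (pw ly n ++ (Iw (pw ly n) ++ [:: inv_letter (true, b)]) ++ Iw (pw lx m))).
    by apply: eqw_cat => //; apply: eqw_cat => //; apply: eqw_sym.
  rewrite catA catA -catA.
  rewrite -[X in eqw _ X]cat0s.
  by apply: eqw_cat => //; apply: eqw_Iwr.
-
  have Hx := @step_pw lx (false, b) m.
  have Hx' : eqw ((false, b) :: pw lx m) (pw lx (ex1 (false, b) + m)).
    case: b Hx => Hx; rewrite /ey1 /ex1 /=; apply: Hx; first [by left | by right].
  rewrite [ey1 _]/= add0r.
  set X' := pw lx (ex1 (false, b) + m).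
  apply: (@K_eqw (X' ++ Iw X')); last first.
    exact: K_eqw (eqw_sym (eqw_Iwr _)) K_nil.
  apply: eqw_sym.
  apply: eqw_trans (_ : eqw (((false, b) :: pw lx m) ++ (pw ly n ++ Iw (pw ly n)) ++ Iw X') _).
    by rewrite /= -!catA.
  apply: eqw_cat => //.
  rewrite -[X in eqw _ X]cat0s.
  by apply: eqw_cat => //; apply: eqw_Iwr.
Qed.

Lemma eqw_Iwl_cat c X : eqw (Iw c ++ c ++ X) X.
Proof.
rewrite catA -[X in eqw _ X]cat0s.
by apply: eqw_cat => //; apply: eqw_Iwl.
Qed.

Lemma rearr (c w N N' : seq letter) :
  eqw ((c ++ (w ++ Iw N) ++ Iw c) ++ (c ++ N ++ Iw N')) (c ++ w ++ Iw N').
Proof.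
rewrite -!catA.
apply: (@eqw_cat c c) => //; apply: (@eqw_cat w w) => //.
apply: eqw_trans (eqw_Iwl_cat N (Iw N')).
apply: (@eqw_cat (Iw N) (Iw N)) => //.
exact: eqw_Iwl_cat.
Qed.

Lemma K_normal w : K (w ++ Iw (Nw (exs w) (eys w))).
Proof.
elim: w => [|l w IH].
  by rewrite /exs /eys !big_nil /=; apply: K_nil.
rewrite exs_cons eys_cons.
have H := K_cat (K_conj [:: l] IH) (S_step l (exs w) (eys w)).
apply: K_eqw H.
exact: rearr.
Qed.

Lemma K_of_exs (a : F2) : exs (proj1_sig a) = 0 -> eys (proj1_sig a) = 0 ->
  in_commutator_subgroup a.
Proof.
move=> H1 H2.
have := K_normal (proj1_sig a).
by rewrite H1 H2 /= cats0 /K -F2_of_val.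
Qed.

Definition Phi (p : int * int) (w : seq letter) : int :=
  \sum_(s <- path_edges p w | ~~ s.1.1) s.1.2.2 * s.2.

Lemma Phi_nil p : Phi p [::] = 0.
Proof. by case: p => i j; rewrite /Phi big_nil. Qed.

Lemma Phi_cons i j l w :
  Phi (i, j) (l :: w) = (if l.1 then 0 else j * ex1 l) + Phi (i + ex1 l, j + ey1 l) w.
Proof.
by case: l => [[] []]; rewrite /Phi /= big_cons /= ?addr0 ?add0r.
Qed.

Lemma Phi_shift i j w : Phi (i, j) w = Phi (0, 0) w + j * exs w.
Proof.
elim: w i j => [|l w IH] i j.
  by rewrite !Phi_nil /exs big_nil mulr0 addr0.
rewrite !Phi_cons IH [Phi (0 + _, _) _]IH exs_cons.
by case: l => [[] []] /=; ring.
Qed.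

Definition P0 w := Phi (0, 0) w.

Lemma Phi_cat i j u v :
  Phi (i, j) (u ++ v) = Phi (i, j) u + P0 v + (j + eys u) * exs v.
Proof.
elim: u i j => [|l u IH] i j /=.
  by rewrite Phi_nil Phi_shift /eys big_nil addr0 add0r.
rewrite !Phi_cons IH eys_cons; ring.
Qed.

Lemma P0_cat u v : P0 (u ++ v) = P0 u + P0 v + eys u * exs v.
Proof. by rewrite /P0 Phi_cat add0r. Qed.

Lemma P0_cancel l s : P0 (l :: inv_letter l :: s) = P0 s.
Proof.
rewrite -[l :: _ :: s]/([:: l; inv_letter l] ++ s) P0_cat.
have -> : eys [:: l; inv_letter l] = 0.
  by rewrite !eys_cons ey1_inv /eys big_nil addr0 subrr.
have -> : P0 [:: l; inv_letter l] = 0.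
  by rewrite /P0 !Phi_cons Phi_nil; case: l => [[] []] /=; ring.
by rewrite mul0r addr0 add0r.
Qed.

Lemma P0_push l s : P0 (push l s) = P0 (l :: s).
Proof.
case: s => [//|l' s'] /=.
case: eqP => [->|_] //.
by rewrite P0_cancel.
Qed.

Lemma P0_reduce w : P0 (reduce w) = P0 w.
Proof.
elim: w => [//|l w IH] /=.
rewrite P0_push -[l :: reduce w]/([:: l] ++ reduce w) P0_cat IH exs_reduce.
by rewrite -P0_cat.
Qed.

Lemma sum_undup (L : seq (edge * int)) :
  \sum_(e <- undup [seq s.1 | s <- L] | ~~ e.1) e.2.2 * (\sum_(s <- L | s.1 == e) s.2)
  = \sum_(s <- L | ~~ s.1.1) s.1.2.2 * s.2.
Proof.
under eq_bigr do rewrite big_distrr.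
rewrite (exchange_big_dep (fun s : edge * int => ~~ s.1.1)) /=; last first.
  by move=> e s He /eqP ->.
rewrite big_seq_cond [RHS]big_seq_cond; apply: eq_bigr => s /andP[Hs Hc].
rewrite (eq_bigl (fun e => e == s.1)); last first.
  move=> e /=; rewrite eq_sym; case: eqP => [->|_]; by rewrite ?Hc ?andbF.
rewrite -big_filter.
have -> : [seq e <- undup [seq s0.1 | s0 <- L] | e == s.1] = [:: s.1].
  apply: filter_pred1_uniq; first exact: undup_uniq.
  by rewrite mem_undup; apply: map_f.
by rewrite big_seq1.
Qed.

Lemma phi_P0 (a : F2) : phi a = P0 (proj1_sig a).
Proof. by rewrite /phi /chain_coef sum_undup. Qed.

Theorem lemma3p1 (g a b : F2) :
  in_commutator_subgroup g -> phi g = 0%R ->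
  g = f2mul a b -> conjugate a b ->
  in_G1 a /\ in_G1 b.
Proof.
move=> Hg Hphi Hab [c Hb].
set A := proj1_sig a; set C := proj1_sig c.
have Eb : b = F2_of_word (C ++ A ++ Iw C).
  by rewrite Hb (F2_of_val a) (F2_of_val c) f2inv_word !f2mul_word -catA.
have Eg : g = F2_of_word (A ++ C ++ A ++ Iw C).
  by rewrite Hab Eb (F2_of_val a) f2mul_word.
have [Hx Hy] := commutator_exs Hg.
rewrite Eg /= exs_reduce eys_reduce in Hx Hy.
rewrite !exs_cat !eys_cat exs_Iw eys_Iw in Hx Hy.
have HxA : exs A = 0 by lia.
have HyA : eys A = 0 by lia.
have HxB : exs (proj1_sig b) = 0.
  by rewrite Eb /= exs_reduce !exs_cat exs_Iw HxA; ring.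
have HyB : eys (proj1_sig b) = 0.
  by rewrite Eb /= eys_reduce !eys_cat eys_Iw HyA; ring.
have HCC : P0 (C ++ Iw C) = 0.
  by rewrite -P0_reduce (eqw_Iwr C) /P0 Phi_nil.
rewrite P0_cat exs_Iw in HCC.
have HPb : P0 (proj1_sig b) = P0 A.
  rewrite Eb /= P0_reduce !P0_cat !exs_cat exs_Iw HxA HyA.
  rewrite mul0r addr0 sub0r -[RHS]addr0 -HCC; ring.
have HPA : P0 A = 0.
  have : P0 (proj1_sig g) = P0 A + P0 A.
    rewrite Eg /= P0_reduce P0_cat.
    have := HPb; rewrite Eb /= P0_reduce => ->.
    by rewrite HyA mul0r addr0.
  rewrite -phi_P0 Hphi => H; lia.
split; split.
- exact: K_of_exs.
- by rewrite phi_P0.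
- exact: K_of_exs.
- by rewrite phi_P0 HPb.
Qed.
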